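(* There is an absolute constant $C$ such that for every alphabet $\Sigma$ of size $\sigma\ge 2$, every positive integer $d$, and every string $T$ over $\Sigma$ of length $n>d$, $\mathcal{S}(T,d)\le C\,d(n-d)$, i.e., $\mathcal{S}(T,d)\in O(d(n-d))$. This upper bound is tight when $\sigma\ge d+1$: there is an absolute constant $c>0$ such that for all integers $d,n,\sigma$ with $1\le d\le\sigma-1$ and $n>d$, there exists a string $T'$ of length $n$ over an alphabet of size $\sigma$ with $\mathcal{S}(T',d)\ge c\,d(n-d)$.
   Context: For a string $S$ over alphabet $\Sigma$, a string $w\in\Sigma^*$ is a minimal absent word (MAW) of $S$ if $w$ does not occur in $S$ but every proper substring of $w$ (including the empty string) occurs in $S$; $\mathsf{MAW}(S)$ is the set of all MAWs of $S$. $T[a..b]$ denotes the substring of $T$ from position $a$ to $b$. For a string $T$ of length $n>d$, $\mathcal{S}(T,d)=\sum_{i=1}^{n-d}|\mathsf{MAW}(T[i..i+d-1])\bigtriangleup\mathsf{MAW}(T[i+1..i+d])|$, where $\bigtriangleup$ is symmetric difference. *)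

(* Defs.v *)
From mathcomp Require Import all_boot all_order all_algebra.
From Stdlib Require Import ClassicalEpsilon.
Set Implicit Arguments. Unset Strict Implicit. Unset Printing Implicit Defensive.

Section MAW.
Variable Sigma : finType.

Definition proper_infix (u w : seq Sigma) : bool := infix u w && (u != w).

Definition is_maw (S w : seq Sigma) : Prop :=
  ~~ infix w S /\ forall u, proper_infix u w -> infix u S.

Lemma maw_size S w : is_maw S w -> size w <= (size S).+1.
Proof.
case=> nw H; case: w nw H => [|a w] nw H.
  by rewrite infix0s in nw.
have : infix w S.
  apply: H; rewrite /proper_infix infix_cons /=.
  apply/eqP=> e; have := congr1 size e; rewrite /= => /eqP.
  by rewrite -[X in X == _]addn0 -addn1 eqn_add2l.
by move/infixW/size_subseq.
Qed.

Definition word (L : nat) := {k : 'I_L & k.-tuple Sigma}.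

(* MAW(S), restricted to words of length < L; by maw_size this is all of
   MAW(S) as soon as (size S).+1 < L *)
Definition mawset (L : nat) (S : seq Sigma) : {set word L} :=
  [set x : word L | if excluded_middle_informative (is_maw S (tagged x : seq Sigma))
                    then true else false].

(* T[i+1 .. i+d] (1-indexed) = window T d i (0-indexed start i) *)
Definition window (T : seq Sigma) (d i : nat) : seq Sigma := take d (drop i T).

Definition symdiff (L : nat) (A B : {set word L}) : {set word L} :=
  (A :\: B) :|: (B :\: A).

Definition Scost (T : seq Sigma) (d : nat) : nat :=
  \sum_(i < size T - d)
     #|symdiff (mawset d.+2 (window T d i)) (mawset d.+2 (window T d i.+1))|.

End MAW.

(* Main.v *)
Require Import Defs.
From mathcomp Require Import all_boot all_order all_algebra.
From mathcomp Require Import zify.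
From Stdlib Require Import ClassicalEpsilon.
Set Implicit Arguments. Unset Strict Implicit. Unset Printing Implicit Defensive.

Definition tw {Sigma : finType} L (x : word Sigma L) : seq Sigma := tagged x.

Lemma in_mawset {Sigma : finType} L (S : seq Sigma) (x : word Sigma L) :
  x \in mawset L S <-> is_maw S (tw x).
Proof.
rewrite inE; case: excluded_middle_informative => // H; split => //.
Qed.

Lemma tw_inj {Sigma : finType} L : injective (@tw Sigma L).
Proof.
case=> [k t] [k' t']; rewrite /tw /= => e.
have ek : k = k'.
  by apply: val_inj; rewrite /= -(size_tuple t) -(size_tuple t') e.
subst k'; congr existT; exact: val_inj.
Qed.

Lemma count_upper {Sigma : finType} L K (X : {set word Sigma L})
  (P : seq Sigma -> Prop) (g : seq Sigma -> nat) :
  (forall x, x \in X -> P (tw x)) ->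
  (forall u v, P u -> P v -> g u = g v -> u = v) ->
  (forall u, P u -> g u < K) -> #|X| <= K.
Proof.
move=> HX Hinj Hb; rewrite cardE -(size_map (fun x => g (tw x))).
rewrite -[K](size_iota 0); apply: uniq_leq_size.
  rewrite map_inj_in_uniq ?enum_uniq // => x y; rewrite !mem_enum => hx hy e.
  by apply: tw_inj; apply: Hinj => //; apply: HX.
move=> z /mapP [x]; rewrite mem_enum => hx ->; rewrite mem_iota /=.
exact: Hb (HX _ hx).
Qed.

Definition toword {Sigma : finType} L (s : seq Sigma) : word Sigma L.+1 :=
  match ltnP (size s) L.+1 with
  | LtnNotGeq h => existT _ (Ordinal h) (in_tuple s)
  | _ => existT _ ord0 [tuple]
  end.

Lemma towordK {Sigma : finType} L (s : seq Sigma) : size s < L.+1 -> tw (toword L s) = s.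
Proof.
rewrite /toword; case: ltnP => //; by rewrite ltnNge => ->.
Qed.

Lemma count_lower {Sigma : finType} L (X : {set word Sigma L.+1}) (Q : seq (seq Sigma)) :
  uniq Q -> (forall s, s \in Q -> size s < L.+1 /\ toword L s \in X) -> size Q <= #|X|.
Proof.
move=> uQ HQ; rewrite cardE -(size_map (toword L)); apply: uniq_leq_size.
  rewrite map_inj_in_uniq // => x y hx hy e.
  by rewrite -(towordK (HQ x hx).1) -(towordK (HQ y hy).1) e.
move=> z /mapP [s hs ->]; rewrite mem_enum; exact: (HQ s hs).2.
Qed.


Lemma proper_split {T : finType} (u : seq T) c v e :
  proper_infix u (c :: rcons v e) -> infix u (c :: v) || infix u (rcons v e).
Proof.
case/andP => /infixP [p [q E]] ne.
case: p E => [|z p] E.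
  case/lastP: q E => [|q z] E.
    by move: ne; rewrite E /= cats0 eqxx.
  apply/orP; left; apply/infixP; exists [::], q.
  move: E; rewrite /= -rcons_cat -rcons_cons => /rcons_inj [-> _] //.
apply/orP; right; apply/infixP; exists p, q; by case: E.
Qed.

Lemma prefix_common {T : finType} (p1 p2 S : seq T) :
  prefix p1 S -> prefix p2 S -> size p1 <= size p2 -> prefix p1 p2.
Proof.
rewrite !prefixE => /eqP E1 /eqP E2 le; rewrite -E2 take_takel //.
by rewrite E1.
Qed.

Lemma prefix_same {T : finType} (p1 p2 S : seq T) :
  prefix p1 S -> prefix p2 S -> size p1 = size p2 -> p1 = p2.
Proof.
rewrite !prefixE => /eqP E1 /eqP E2 e; by rewrite -E1 -E2 e.
Qed.

Lemma prefix_rcons_le {T : finType} (p q : seq T) x :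
  prefix p (rcons q x) -> size p <= size q -> prefix p q.
Proof.
rewrite !prefixE -cats1 => /eqP E le; by rewrite -[X in _ == X]E takel_cat.
Qed.

Lemma maw_rev {T : finType} (S w : seq T) : is_maw S w -> is_maw (rev S) (rev w).
Proof.
case=> nw H; split; first by rewrite infix_rev.
move=> u /andP [iu ne]; rewrite -infix_revLR; apply: H; apply/andP; split.
  by rewrite infix_revLR.
by apply: contra ne => /eqP <-; rewrite revK.
Qed.

Lemma maw_revE {T : finType} (S w : seq T) : is_maw (rev S) (rev w) <-> is_maw S w.
Proof. split; last exact: maw_rev. by move/maw_rev; rewrite !revK. Qed.

Lemma maw_nil {T : finType} (S : seq T) : ~ is_maw S [::].
Proof. by case; rewrite infix0s. Qed.

Lemma maw_letter {T : finType} (S : seq T) c : is_maw S [:: c] <-> c \notin S.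
Proof.
split; first by case; rewrite infix1s.
move=> h; split; first by rewrite infix1s.
by move=> u /andP []; rewrite infixs1 => /orP [/eqP -> _| ->] //; rewrite infix0s.
Qed.

Lemma maw_long {T : finType} (S : seq T) c v e :
  ~~ infix (c :: rcons v e) S -> infix (c :: v) S -> infix (rcons v e) S ->
  is_maw S (c :: rcons v e).
Proof.
move=> h1 h2 h3; split => // u /proper_split /orP [] h.
  exact: infix_trans h h2.
exact: infix_trans h h3.
Qed.

Lemma maw_parts {T : finType} (S : seq T) c v e :
  is_maw S (c :: rcons v e) -> infix (c :: v) S /\ infix (rcons v e) S.
Proof.
case=> _ H; split; apply: H; apply/andP; split.
- by rewrite -rcons_cons infix_rcons.
- apply/eqP => /(congr1 size); rewrite /= !size_rcons; lia.
- exact: infix_cons.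
- apply/eqP => /(congr1 size); rewrite /= !size_rcons; lia.
Qed.


Lemma inj2 {T : finType} (W D : seq T) c1 v1 e1 c2 v2 e2 :
  prefix (c1 :: v1) W -> prefix (c2 :: v2) W ->
  prefix (rcons v1 e1) D -> prefix (rcons v2 e2) D ->
  ~~ infix (c1 :: rcons v1 e1) W -> size v1 <= size v2 ->
  c1 :: rcons v1 e1 = c2 :: rcons v2 e2.
Proof.
move=> p1 p2 q1 q2 n1; rewrite leq_eqVlt => /orP [/eqP es|lt].
  have c12 : c1 = c2.
    by case: W p1 p2 {n1} => // x W /andP [/eqP -> _] /andP [/eqP -> _].
  by rewrite c12 (prefix_same q1 q2) // !size_rcons es.
have h : prefix (rcons v1 e1) v2.
  apply: (@prefix_rcons_le _ _ _ e2); last by rewrite size_rcons.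
  by apply: (prefix_common q1 q2); rewrite !size_rcons ltnW.
have c12 : c1 = c2.
  by case: W p1 p2 {n1} => // x W /andP [/eqP -> _] /andP [/eqP -> _].
case/negP: n1; apply: prefixW; apply: prefix_trans p2.
by rewrite c12 prefix_cons eqxx.
Qed.

Lemma inj3 {T : finType} (W D : seq T) c1 v1 e1 c2 v2 e2 :
  prefix (c1 :: v1) D -> prefix (c2 :: v2) D -> infix D W ->
  prefix (rcons v1 e1) W -> prefix (rcons v2 e2) W ->
  ~~ infix (c1 :: rcons v1 e1) W -> size v1 <= size v2 ->
  c1 :: rcons v1 e1 = c2 :: rcons v2 e2.
Proof.
move=> p1 p2 iD q1 q2 n1; rewrite leq_eqVlt => /orP [/eqP es|lt].
  have := prefix_same p1 p2; rewrite /= es => /(_ erefl) [ec ev]; subst c1 v1.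
  by rewrite (prefix_same q1 q2) // !size_rcons.
have h : prefix (rcons v1 e1) v2.
  apply: (@prefix_rcons_le _ _ _ e2); last by rewrite size_rcons.
  by apply: (prefix_common q1 q2); rewrite !size_rcons ltnW.
have := prefix_common p1 p2; rewrite /= ltnW // => /(_ isT) /andP [/eqP c12 _].
case/negP: n1; apply: infix_trans iD; apply: prefixW; apply: prefix_trans p2.
by rewrite c12 prefix_cons eqxx.
Qed.


Definition gfun {T : finType} (a b : T) (M w : seq T) : nat :=
  if infix w (rcons M b) then size w
  else if prefix (take (size w).-1 w) (a :: M) then
    (size M).+2 + infix_index (behead w) (a :: M)
  else (size M).*2 + 4 + infix_index (take (size w).-1 w) (a :: M).

Lemma take_init {T : Type} (c : T) v e :
  take (size (c :: rcons v e)).-1 (c :: rcons v e) = c :: v.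
Proof. by rewrite /= size_rcons /= -cats1 take_size_cat. Qed.

Lemma infix_prefix_index {T : finType} (s W : seq T) :
  infix s W -> prefix s (drop (infix_index s W) W).
Proof. by rewrite infixE prefixE. Qed.

Lemma classify {T : finType} (a b : T) (M w : seq T) :
  is_maw (a :: M) w -> ~ is_maw (rcons M b) w ->
  (suffix w (rcons M b) /\ gfun a b M w = size w)
  \/ (exists c v e, w = c :: rcons v e /\ ~~ infix w (a :: M) /\
        prefix (c :: v) (a :: M) /\
        prefix (rcons v e) (drop (infix_index (rcons v e) (a :: M)) (a :: M)) /\
        infix_index (rcons v e) (a :: M) <= (size M).+1 /\
        gfun a b M w = (size M).+2 + infix_index (rcons v e) (a :: M))
  \/ (exists c v e, w = c :: rcons v e /\ ~~ infix w (a :: M) /\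
        prefix (rcons v e) (a :: M) /\
        prefix (c :: v) (drop (infix_index (c :: v) (a :: M)) (a :: M)) /\
        infix_index (c :: v) (a :: M) <= (size M).+1 /\
        gfun a b M w = (size M).*2 + 4 + infix_index (c :: v) (a :: M)).
Proof.
move=> mw nmw; have nw := mw.1.
have nM : ~~ infix w M by apply: contra nw => h; apply: infix_trans h (infix_cons _ _).
case iw: (infix w (rcons M b)).
  left; split; last by rewrite /gfun iw.
  by move: iw; rewrite infix_rconsl (negbTE nM) orbF.
right.
case: w mw nmw nw nM iw => [|c t] mw nmw nw nM iw; first by case: (maw_nil mw).
case/lastP: t mw nmw nw nM iw => [|v e] mw nmw nw nM iw.
  by case: nmw; apply/maw_letter; rewrite -infix1s iw.
have [i1 i2] := maw_parts mw.
have nboth : ~~ (infix (c :: v) (rcons M b) && infix (rcons v e) (rcons M b)).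
  apply/negP => /andP [j1 j2]; apply: nmw; apply: maw_long => //; by rewrite iw.
have sz : forall s, infix s (a :: M) -> ~~ infix s (rcons M b) -> prefix s (a :: M).
  move=> s h1 h2; move: h1; rewrite infix_consl => /orP [] // h.
  by case/negP: h2; apply: infix_trans h (infix_rcons _ _).
case pc: (prefix (c :: v) (a :: M)).
  left; exists c, v, e; do 3 split => //.
  split; first exact: infix_prefix_index.
  split; first by have := infixTindex (rcons v e) (a :: M); rewrite i2 /= => ->.
  by rewrite /gfun iw take_init pc.
right; exists c, v, e; do 2 split => //.
have j1 : infix (c :: v) (rcons M b).
  by apply/negPn/negP => h; move: (sz _ i1 h); rewrite pc.
split; first by apply: sz => //; move: nboth; rewrite j1.
split; first exact: infix_prefix_index.
split; first by have := infixTindex (c :: v) (a :: M); rewrite i1 /= => ->.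
by rewrite /gfun iw take_init pc.
Qed.


Lemma upper_seq {T : finType} (a b : T) (M : seq T) :
  exists g : seq T -> nat,
   (forall u v, is_maw (a :: M) u /\ ~ is_maw (rcons M b) u ->
      is_maw (a :: M) v /\ ~ is_maw (rcons M b) v -> g u = g v -> u = v) /\
   (forall u, is_maw (a :: M) u /\ ~ is_maw (rcons M b) u -> g u < 3 * size M + 6).
Proof.
exists (gfun a b M); split; last first.
  move=> u [m1 m2]; case: (classify m1 m2) => [[s ->]|[]].
  - have h : size u <= size (rcons M b) := size_suffix s.
    by rewrite size_rcons in h; lia.
  - by case=> c [v [e [_ [_ [_ [_ [h ->]]]]]]]; lia.
  - by case=> c [v [e [_ [_ [_ [_ [h ->]]]]]]]; lia.
move=> u w [m1 m2] [m3 m4].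
have [[s1 g1]|[[c [v [e [Eu [n1 [p1 [q1 [h1 g1]]]]]]]]|[c [v [e [Eu [n1 [p1 [q1 [h1 g1]]]]]]]]]] := classify m1 m2;
have [[s2 g2]|[[c' [v' [e' [Ew [n2 [p2 [q2 [h2 g2]]]]]]]]|[c' [v' [e' [Ew [n2 [p2 [q2 [h2 g2]]]]]]]]]] := classify m3 m4;
rewrite g1 g2 => E.
- move: s1 s2; rewrite !suffixE => /eqP e1 /eqP e2.
  by rewrite -e1 -e2 E.
- have h0 : size u <= size (rcons M b) := size_suffix s1.
  rewrite size_rcons in h0; lia.
- have h0 : size u <= size (rcons M b) := size_suffix s1.
  rewrite size_rcons in h0; lia.
- have h0 : size w <= size (rcons M b) := size_suffix s2.
  rewrite size_rcons in h0; lia.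
- move/addnI: E => E; rewrite Eu Ew; rewrite E in q1.
  case: (leqP (size v) (size v')) => le.
    by apply: inj2 p1 p2 q1 q2 _ le; rewrite -Eu.
  by apply/esym; apply: inj2 p2 p1 q2 q1 _ (ltnW le); rewrite -Ew.
- lia.
- have h0 : size w <= size (rcons M b) := size_suffix s2.
  rewrite size_rcons in h0; lia.
- lia.
- move/addnI: E => E; rewrite Eu Ew; rewrite E in q1.
  case: (leqP (size v) (size v')) => le.
    by apply: inj3 q1 q2 (infix_drop _ _) p1 p2 _ le; rewrite -Eu.
  by apply/esym; apply: inj3 q2 q1 (infix_drop _ _) p2 p1 _ (ltnW le); rewrite -Ew.
Qed.


Lemma symdiff_le {T : finType} L (a b : T) (M : seq T) :
  #|symdiff (mawset L (a :: M)) (mawset L (rcons M b))| <= 2 * (3 * size M + 6).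
Proof.
rewrite /symdiff cardsU mul2n -addnn; apply: leq_trans (leq_subr _ _) _.
apply: leq_add.
  have [g [gi gb]] := upper_seq a b M.
  apply: (@count_upper _ _ _ _ (fun w => is_maw (a :: M) w /\ ~ is_maw (rcons M b) w) g) => //.
  move=> x /setDP [h1 h2]; split; first exact/in_mawset.
  by move=> h; case/negP: h2; apply/in_mawset.
have [g [gi gb]] := upper_seq b a (rev M).
apply: (@count_upper _ _ _ _ (fun w => is_maw (rcons M b) w /\ ~ is_maw (a :: M) w) (fun w => g (rev w))).
- move=> x /setDP [h1 h2]; split; first exact/in_mawset.
  by move=> h; case/negP: h2; apply/in_mawset.
- move=> u v [u1 u2] [v1 v2] e.
  rewrite -[u]revK -[v]revK; congr rev; apply: gi e.
  + split; first by rewrite -rev_rcons; apply: maw_rev.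
    by rewrite -rev_cons maw_revE.
  + split; first by rewrite -rev_rcons; apply: maw_rev.
    by rewrite -rev_cons maw_revE.
- move=> u [u1 u2]; rewrite -(size_rev M); apply: gb; split.
    by rewrite -rev_rcons; apply: maw_rev.
  by rewrite -rev_cons maw_revE.
Qed.

Lemma window_split {T : finType} (S : seq T) d i :
  0 < d -> i + d < size S ->
  exists a M b, [/\ take d.+1 (drop i S) = a :: rcons M b,
     window S d i = a :: M, window S d i.+1 = rcons M b & size M = d.-1].
Proof.
move=> d0 lt.
have sz : size (take d.+1 (drop i S)) = d.+1.
  by rewrite size_takel // size_drop; lia.
case E: (take d.+1 (drop i S)) sz => [|a t] // [sz].
case/lastP: t E sz => [|M b] E; first by move=> /= h; lia.
rewrite size_rcons => sz; exists a, M, b; split => //.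
- rewrite /window -(take_takel _ (leqnSn d)) E.
  by rewrite -sz /= -cats1 take_size_cat.
- rewrite /window -addn1 addnC -drop_drop take_drop addn1 E /=.
  by rewrite drop0.
- by rewrite -sz.
Qed.


Lemma not_infix2 {T : finType} (M : seq T) b y :
  b \notin M -> ~~ infix [:: b; y] (rcons M b).
Proof.
move=> nb; apply/negP => /infixP [p [q E]].
move: E; rewrite /= lastI -rcons_cat => /rcons_inj [EM _].
by move: nb; rewrite EM mem_cat inE eqxx orbT.
Qed.

Lemma lower_step {T : finType} L (a b : T) (M : seq T) : 0 < L ->
  uniq (a :: rcons M b) ->
  (size M).+1 <= #|symdiff (mawset L.+2 (a :: M)) (mawset L.+2 (rcons M b))|.
Proof.
move=> L0 u.
have na : a \notin rcons M b by move: u => /andP [].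
have ub : uniq (rcons M b) by move: u => /andP [].
have nbM : b \notin M by move: ub; rewrite -cats1 cat_uniq /= orbF andbT => /andP [_ ->].
have uM : uniq M by move: ub; rewrite -cats1 cat_uniq => /andP [].
have nbW : b \notin a :: M.
  rewrite inE negb_or nbM andbT; apply/eqP => ab; move: na; rewrite ab mem_rcons inE eqxx //.
rewrite /symdiff; apply: leq_trans (subset_leq_card (subsetUr _ _)).
set Q := [:: a] :: [seq [:: b; y] | y <- M].
have -> : (size M).+1 = size Q by rewrite /= size_map.
apply: count_lower.
  rewrite /Q /= map_inj_uniq ?uM ?andbT; last by move=> x y [].
  by apply/mapP => -[y _].
move=> s; rewrite inE => /orP [/eqP ->|/mapP [y yM ->]].
  split => //; apply/setDP; split.
    by apply/in_mawset; rewrite towordK //; apply/maw_letter.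
  by apply/negP => /in_mawset; rewrite towordK // => /maw_letter; rewrite inE eqxx.
split; first by rewrite /=; lia.
apply/setDP; split; last first.
  apply/negP => /in_mawset; rewrite towordK //.
  move=> /(@maw_parts _ _ b [::] y) [h _]; move: h; rewrite infix1s.
  by rewrite (negbTE nbW).
apply/in_mawset; rewrite towordK /=; last lia.
  apply: (@maw_long _ _ b [::] y); first exact: not_infix2.
    by rewrite infix1s mem_rcons inE eqxx.
by rewrite /= infix1s mem_rcons inE yM orbT.
Qed.

Lemma mod_close m x y : x %% m.+1 = y %% m.+1 -> x <= y -> y < x + m.+1 -> x = y.
Proof.
move=> e le lt.
have : m.+1 %| y - x by rewrite -eqn_mod_dvd // e.
case: (posnP (y - x)) => [h|h /(dvdn_leq h)]; lia.
Qed.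


Lemma Scost_upper {Sigma : finType} (T : seq Sigma) d : (0 < d)%N ->
  (Scost T d <= 12 * (d * (size T - d)))%N.
Proof.
move=> d0; rewrite /Scost.
apply: (@leq_trans (\sum_(i < size T - d) (12 * d))%N).
  apply: leq_sum => i _.
  have lt : (i + d < size T)%N by have := ltn_ord i; lia.
  have [a [M [b [_ -> -> sz]]]] := window_split d0 lt.
  apply: leq_trans (symdiff_le _ _ _ _) _; lia.
rewrite big_const_ord iter_addn_0; lia.
Qed.

Lemma Scost_lower (s d n : nat) : (1 <= d)%N -> (d <= s)%N -> (d < n)%N ->
  (d * (n - d) <= Scost (mkseq (fun j => inord (j %% d.+1) : 'I_s.+1) n) d)%N.
Proof.
move=> d1 ds dn; rewrite /Scost size_mkseq.
apply: (@leq_trans (\sum_(i < n - d) d)%N); first by rewrite big_const_ord iter_addn_0 mulnC.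
apply: leq_sum => i _.
have lt : (i + d < n)%N by have := ltn_ord i; lia.
have lt' : (i + d < size (mkseq (fun j => inord (j %% d.+1) : 'I_s.+1) n))%N by rewrite size_mkseq.
have [a [M [b [E -> -> sz]]]] := window_split d1 lt'.
have U : uniq (a :: rcons M b).
  rewrite -E /mkseq -map_drop -map_take drop_iota take_iota.
  rewrite map_inj_in_uniq ?iota_uniq // => x y; rewrite !mem_iota => hx hy.
  move=> e0; have := congr1 val e0 => /=; rewrite !inordK; try (apply: leq_trans (ltn_pmod _ _) _; lia).
  move=> e; case: (leqP x y) => le.
    by apply: (mod_close e) => //; lia.
  by apply/esym; apply: (mod_close (esym e)); lia.
apply: leq_trans (lower_step d1 U); lia.
Qed.


Import Order.TTheory GRing.Theory Num.Theory.
Local Open Scope ring_scope.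

Theorem lemma16 :
  (exists C : rat, forall (Sigma : finType), (2 <= #|Sigma|)%N ->
     forall (d : nat) (T : seq Sigma), (0 < d)%N -> (d < size T)%N ->
       (Scost T d)%:R <= C * (d * (size T - d))%:R)
  /\
  (exists c : rat, 0 < c /\
     forall (d n sigma : nat), (1 <= d)%N -> (d <= sigma - 1)%N -> (d < n)%N ->
       exists T' : seq 'I_sigma, size T' = n /\
         c * (d * (n - d))%:R <= (Scost T' d)%:R).
Proof.
split.
  exists 12%:R => Sigma _ d T d0 _.
  by rewrite -natrM ler_nat; apply: Scost_upper.
exists 1; split; first by [].
move=> d n [|s] d1 ds dn; first by move: ds d1; rewrite sub0n leqn0 => /eqP ->.
exists (mkseq (fun j => inord (j %% d.+1) : 'I_s.+1) n); split; first by rewrite size_mkseq.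
rewrite mul1r ler_nat; apply: Scost_lower => //.
by move: ds; rewrite subn1.
Qed.
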